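(* For every positive integer $n$, $C_0(n)=\lfloor n/2\rfloor+1$.
   Context: Define on triples of integers $\Gamma_{0,1}(\tau_1,\tau_2,\tau_3)=(\tau_2,\tau_3,\tau_2+\tau_3)$ and $\Gamma_{0,2}(\tau_1,\tau_2,\tau_3)=(\tau_1,\tau_3,\tau_1+\tau_3)$. For an integer $\alpha\ge1$, the $(\alpha,0)$-Euclid tree is the set of triples obtained from the root $(\alpha,\alpha,2\alpha)$ by finitely many (possibly zero) applications of $\Gamma_{0,1},\Gamma_{0,2}$; $\max T$ is the largest entry of $T$. Define $C_0(n)=\#\{T: T\text{ is on the }(\alpha,0)\text{-Euclid tree for some integer }\alpha\ge1,\ \max T=n\}+1$ (distinct triples counted). *)

(* Defs.v *)
From mathcomp Require Import all_boot.
Set Implicit Arguments. Unset Strict Implicit. Unset Printing Implicit Defensive.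

Definition triple := (nat * nat * nat)%type.

Definition Gamma01 (t : triple) : triple :=
  let: (t1, t2, t3) := t in (t2, t3, t2 + t3).
Definition Gamma02 (t : triple) : triple :=
  let: (t1, t2, t3) := t in (t1, t3, t1 + t3).

Inductive euclid_tree (alpha : nat) : triple -> Prop :=
| et_root : euclid_tree alpha (alpha, alpha, 2 * alpha)
| et_G01 T : euclid_tree alpha T -> euclid_tree alpha (Gamma01 T)
| et_G02 T : euclid_tree alpha T -> euclid_tree alpha (Gamma02 T).

Definition maxT (t : triple) : nat :=
  let: (t1, t2, t3) := t in maxn t1 (maxn t2 t3).

Definition counted (n : nat) (T : triple) : Prop :=
  (exists alpha, 1 <= alpha /\ euclid_tree alpha T) /\ maxT T = n.

Definition C0_is (n c : nat) : Prop :=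
  exists s : seq triple, uniq s /\ (forall T, T \in s <-> counted n T) /\ c = size s + 1.

(* Main.v *)
Require Import Defs.
From mathcomp Require Import all_boot.
From mathcomp Require Import zify.

Lemma tree_shape alpha T : 1 <= alpha -> euclid_tree alpha T ->
  exists a b, T = (a, b, a + b) /\ 1 <= a /\ a <= b.
Proof.
move=> ha; elim=> [|T' _ [a [b [-> [h1 h2]]]]|T' _ [a [b [-> [h1 h2]]]]].
- exists alpha, alpha; split; [congr (_,_,_); lia | lia].
- exists b, (a + b); split; [by [] | lia].
- exists a, (a + b); split; [by [] | lia].
Qed.

Lemma tree_reach k : forall a b, a + b <= k -> 1 <= a -> a <= b ->
  exists alpha, 1 <= alpha /\ euclid_tree alpha (a, b, a + b).
Proof.
elim: k => [|k IH] a b hk h1 h2; first lia.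
case: (ltngtP a b) => hab; last first.
- exists a; split => //; rewrite hab addnn -mul2n; exact: et_root.
- lia.
case: (leqP (b - a) a) => hx.
- have [al [hal ht]] := IH (b - a) a ltac:(lia) ltac:(lia) hx.
  exists al; split => //.
  have -> : (a, b, a + b) = Gamma01 (b - a, a, b - a + a) by rewrite /=; congr (_,_,_); lia.
  exact: et_G01.
- have [al [hal ht]] := IH a (b - a) ltac:(lia) h1 ltac:(lia).
  exists al; split => //.
  have -> : (a, b, a + b) = Gamma02 (a, b - a, a + (b - a)) by rewrite /=; congr (_,_,_); lia.
  exact: et_G02.
Qed.

Theorem lemma3p4 (n : nat) : 0 < n -> C0_is n (n./2 + 1).
Proof.
move=> hn.
have hh : n = n./2.*2 + odd n by rewrite -{1}(odd_double_half n) addnC.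
exists [seq (a, n - a, n) | a <- iota 1 n./2]; split; [|split].
- by rewrite map_inj_uniq ?iota_uniq // => x y; case.
- move=> [[t1 t2] t3]; split.
  + move/mapP=> [a]; rewrite mem_iota => /andP [h1 h2] [-> -> ->].
    split; last by rewrite /maxT; lia.
    have [al [hal ht]] := @tree_reach n a (n - a) ltac:(lia) h1 ltac:(lia).
    exists al; split => //; have e : a + (n - a) = n by lia.
    by rewrite e in ht.
  + move=> [[al [hal ht]] hm].
    have [a [b [[e1 e2 e3] [h1 h2]]]] := @tree_shape al _ hal ht.
    subst t1 t2 t3.
    move: hm; rewrite /maxT /= => hm.
    apply/mapP; exists a; first by rewrite mem_iota; lia.
    congr (_,_,_); lia.
- by rewrite size_map size_iota.
Qed.
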